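(* Let $A\in\mathbb{R}^{n\times n}$ be symmetric positive definite, $b\in\mathbb{R}^n$, and let the $CD$ method (described in the context) be applied to $Ay=b$ with starting point $y_0\in\mathbb{R}^n$ and real parameters $\gamma_k\neq 0$ for all $k\ge 0$. Then any directions $p_0,\dots,p_k$ ($k\ge0$) generated by the method are linearly independent. Moreover, within at most $n$ iterations the method computes the solution of $Ay=b$, i.e. $Ay_h=b$ for some $h\le n$.
   Context: The $CD$ method for solving $Ay=b$, with $A$ symmetric positive definite, starting point $y_0\in\mathbb{R}^n$ and nonzero real parameters $\gamma_0,\gamma_1,\dots$, is the following iteration (all norms Euclidean). Set $r_0=b-Ay_0$; if $r_0=0$ stop; set $p_0=r_0$. For $k=0,1,2,\dots$: compute $a_k=\dfrac{r_k^Tp_k}{p_k^TAp_k}$, $y_{k+1}=y_k+a_kp_k$, $r_{k+1}=r_k-a_kAp_k$; if $r_{k+1}=0$ stop; otherwise set $\sigma_k=\gamma_k\dfrac{\|Ap_k\|^2}{p_k^TAp_k}$ and, if $k=0$, $p_1=\gamma_0Ap_0-\sigma_0p_0$, while if $k\ge1$, $\omega_k=\gamma_k\dfrac{(Ap_k)^T(Ap_{k-1})}{p_{k-1}^TAp_{k-1}}$ and $p_{k+1}=\gamma_kAp_k-\sigma_kp_k-\omega_kp_{k-1}$. *)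

(* Defs.v *)
From HB Require Import structures.
From mathcomp Require Import all_boot all_order all_algebra.
Set Implicit Arguments. Unset Strict Implicit. Unset Printing Implicit Defensive.
Import Order.TTheory GRing.Theory Num.Theory.
Local Open Scope ring_scope.

Definition dotv (R : realFieldType) (n : nat) (u v : 'cV[R]_n) : R :=
  (u^T *m v) ord0 ord0.

Definition spd (R : realFieldType) (n : nat) (A : 'M[R]_n) : Prop :=
  A^T = A /\ forall x : 'cV[R]_n, x != 0 -> 0 < dotv x (A *m x).

(* State of the CD iteration at index k: (y_k, r_k, p_k, p_{k-1}).
   (p_{-1} := 0 is a dummy, never used since omega is only used for k >= 1.) *)
Record cd_state (R : realFieldType) (n : nat) := CDState {
  cd_y : 'cV[R]_n; cd_r : 'cV[R]_n; cd_p : 'cV[R]_n; cd_pprev : 'cV[R]_n }.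

Definition cd_step (R : realFieldType) (n : nat) (A : 'M[R]_n)
    (gamma : nat -> R) (k : nat) (s : cd_state R n) : cd_state R n :=
  let y := cd_y s in let r := cd_r s in let p := cd_p s in
  let pm := cd_pprev s in
  let Ap := A *m p in
  let a := dotv r p / dotv p Ap in
  let y' := y + a *: p in
  let r' := r - a *: Ap in
  let sigma := gamma k * dotv Ap Ap / dotv p Ap in
  let p' :=
    if k is 0 then gamma 0 *: Ap - sigma *: p
    else let omega := gamma k * dotv Ap (A *m pm) / dotv pm (A *m pm) in
         gamma k *: Ap - sigma *: p - omega *: pm in
  CDState y' r' p' p.

Definition cd_init (R : realFieldType) (n : nat) (A : 'M[R]_n)
    (b y0 : 'cV[R]_n) : cd_state R n :=
  let r0 := b - A *m y0 in CDState y0 r0 r0 0.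

(* State at index k (the quantities are only meaningful as long as the
   method has not stopped, i.e. r_0, ..., r_{k-1} are nonzero). *)
Fixpoint cd_iter (R : realFieldType) (n : nat) (A : 'M[R]_n)
    (b y0 : 'cV[R]_n) (gamma : nat -> R) (k : nat) : cd_state R n :=
  if k is k'.+1 then cd_step A gamma k' (cd_iter A b y0 gamma k')
  else cd_init A b y0.

Definition cd_y_ R n A b y0 gamma k := cd_y (@cd_iter R n A b y0 gamma k).
Definition cd_r_ R n A b y0 gamma k := cd_r (@cd_iter R n A b y0 gamma k).
Definition cd_p_ R n A b y0 gamma k := cd_p (@cd_iter R n A b y0 gamma k).

(* Main.v *)
Require Import Defs.
From HB Require Import structures.
From mathcomp Require Import all_boot all_order all_algebra zify.
Import Order.TTheory GRing.Theory Num.Theory.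
Local Open Scope ring_scope.

Section Dot.
Variable (R : realFieldType) (n : nat).
Implicit Types (u v w : 'cV[R]_n).

Lemma dotvE u v : dotv u v = \sum_i u i ord0 * v i ord0.
Proof. by rewrite /dotv mxE; apply: eq_bigr => i _; rewrite mxE. Qed.

Lemma dotvC u v : dotv u v = dotv v u.
Proof. by rewrite !dotvE; apply: eq_bigr => i _; rewrite mulrC. Qed.

Lemma dotvDr u v w : dotv u (v + w) = dotv u v + dotv u w.
Proof. by rewrite /dotv mulmxDr mxE. Qed.

Lemma dotvZr u a v : dotv u (a *: v) = a * dotv u v.
Proof. by rewrite /dotv -scalemxAr mxE. Qed.

Lemma dotvNr u v : dotv u (- v) = - dotv u v.
Proof. by rewrite -scaleN1r dotvZr mulN1r. Qed.

Lemma dotvBr u v w : dotv u (v - w) = dotv u v - dotv u w.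
Proof. by rewrite dotvDr dotvNr. Qed.

Lemma dotvDl u v w : dotv (v + w) u = dotv v u + dotv w u.
Proof. by rewrite !(dotvC _ u) dotvDr. Qed.
Lemma dotvZl u a v : dotv (a *: v) u = a * dotv v u.
Proof. by rewrite !(dotvC _ u) dotvZr. Qed.
Lemma dotvBl u v w : dotv (v - w) u = dotv v u - dotv w u.
Proof. by rewrite !(dotvC _ u) dotvBr. Qed.

Lemma dotv0r u : dotv u 0 = 0.
Proof. by rewrite /dotv mulmx0 mxE. Qed.
Lemma dotv0l u : dotv 0 u = 0.
Proof. by rewrite dotvC dotv0r. Qed.

Lemma dotv_sumr u m (F : 'I_m -> 'cV[R]_n) :
  dotv u (\sum_i F i) = \sum_i dotv u (F i).
Proof.
elim/big_ind2: _ => //; first by rewrite dotv0r.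
by move=> x1 x2 y1 y2 <- <-; rewrite dotvDr.
Qed.

Lemma dotv_sym (A : 'M[R]_n) u v : A^T = A -> dotv (A *m u) v = dotv u (A *m v).
Proof. by move=> AT; rewrite /dotv trmx_mul AT mulmxA. Qed.

Lemma dotv_self_eq0 u : dotv u u = 0 -> u = 0.
Proof.
rewrite dotvE => /psumr_eq0P H.
apply/matrixP => i j; rewrite (ord1 j) mxE.
have /eqP := H (fun i _ => sqr_ge0 (u i ord0)) i isT.
by rewrite mulf_eq0 orbb => /eqP.
Qed.

Lemma orth_span_eq0 (X : seq 'cV[R]_n) r :
  r \in <<X>>%VS -> (forall x, x \in X -> dotv r x = 0) -> r = 0.
Proof.
move=> rX Ho; apply: dotv_self_eq0.
have := coord_span (X := in_tuple X) rX => E.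
rewrite {2}E dotv_sumr big1 // => i _.
by rewrite dotvZr Ho ?mulr0 // mem_nth // ?size_tuple.
Qed.

Lemma free_size (X : seq 'cV[R]_n) : free X -> (size X <= n)%N.
Proof.
rewrite /free => /eqP <-.
have := dimvS (subvf <<X>>%VS); rewrite dimvf dim_matrix; set t := (_ * _)%R; have -> : t = n by by rewrite /t mulr1. by [].
Qed.
End Dot.

Section CD.
Variables (R : realFieldType) (n : nat) (A : 'M[R]_n) (b y0 : 'cV[R]_n)
  (gamma : nat -> R).
Hypothesis (HA : spd A) (Hg : forall k, gamma k != 0).

Let p k := cd_p_ A b y0 gamma k.
Let r k := cd_r_ A b y0 gamma k.
Let y k := cd_y_ A b y0 gamma k.
Let pm k := cd_pprev (cd_iter A b y0 gamma k).
Let B (u v : 'cV[R]_n) := dotv u (A *m v).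

Lemma AT : A^T = A. Proof. by case: HA. Qed.

Lemma Bsym u v : B u v = B v u.
Proof. by rewrite /B dotvC dotv_sym // AT. Qed.

Lemma dotAA u v : dotv (A *m u) (A *m v) = B u (A *m v).
Proof. by rewrite /B dotv_sym // AT. Qed.

Lemma Bpos {u} : u != 0 -> B u u != 0.
Proof. by case: HA => _ H /H /lt0r_neq0. Qed.

Lemma B0r u : B u 0 = 0. Proof. by rewrite /B mulmx0 dotv0r. Qed.

Lemma rS k : r k.+1 = r k - (dotv (r k) (p k) / B (p k) (p k)) *: (A *m p k).
Proof. by []. Qed.

Lemma yS k : y k.+1 = y k + (dotv (r k) (p k) / B (p k) (p k)) *: p k.
Proof. by []. Qed.

Lemma p1 : p 1 = gamma 0 *: (A *m p 0)
   - (gamma 0 * dotv (A *m p 0) (A *m p 0) / B (p 0) (p 0)) *: p 0.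
Proof. by []. Qed.

Lemma pSS k : p k.+2 = gamma k.+1 *: (A *m p k.+1)
   - (gamma k.+1 * dotv (A *m p k.+1) (A *m p k.+1) / B (p k.+1) (p k.+1)) *: p k.+1
   - (gamma k.+1 * dotv (A *m p k.+1) (A *m p k) / B (p k) (p k)) *: p k.
Proof. by []. Qed.

Lemma prec j : exists s w,
  gamma j *: (A *m p j) = p j.+1 + w *: pm j + s *: p j.
Proof.
case: j => [|j].
  exists (gamma 0 * dotv (A *m p 0) (A *m p 0) / B (p 0) (p 0)), 0.
  by rewrite p1 scale0r addr0 subrK.
exists (gamma j.+1 * dotv (A *m p j.+1) (A *m p j.+1) / B (p j.+1) (p j.+1)).
exists (gamma j.+1 * dotv (A *m p j.+1) (A *m p j) / B (p j) (p j)).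
by rewrite pSS !subrK.
Qed.

Lemma r_eq k : r k = b - A *m y k.
Proof.
elim: k => [|k IH] //.
rewrite rS yS IH mulmxDr opprD addrA -scalemxAr.
done.
Qed.

Lemma p_in j m : (j < m)%N -> p j \in mkseq p m.
Proof. by move=> h; rewrite -(nth_mkseq 0 p h) mem_nth // size_mkseq. Qed.

Lemma mkseq_sub m m' : (m <= m')%N -> {subset mkseq p m <= mkseq p m'}.
Proof.
move=> hm x /mapP [i]; rewrite mem_iota => /andP[_ hi] ->.
by apply: p_in; apply: leq_trans hm.
Qed.

Lemma BBl u v w : B (u - v) w = B u w - B v w. Proof. exact: dotvBl. Qed.
Lemma BZl a u w : B (a *: u) w = a * B u w. Proof. exact: dotvZl. Qed.

Lemma key k : (forall j, (j <= k)%N -> B (p j) (p j) != 0) ->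
  (forall i j, (i <= k)%N -> (j <= k)%N -> i != j -> B (p i) (p j) = 0) ->
  forall j, (j <= k)%N -> B (p k.+1) (p j) = 0.
Proof.
case: k => [|m] Bk Ho j hj.
  move: hj; rewrite leqn0 => /eqP ->.
  by rewrite p1 BBl !BZl divfK ?subrr // Bk.
rewrite pSS !BBl !BZl.
move: hj; rewrite leq_eqVlt => /orP [/eqP ->|].
  have -> : B (p m) (p m.+1) = 0 by apply: Ho => //; rewrite neq_ltn ltnSn.
  rewrite mulr0 subr0.
  have -> : B (A *m p m.+1) (p m.+1) = dotv (A *m p m.+1) (A *m p m.+1) by [].
  by rewrite divfK ?subrr // Bk.
rewrite ltnS leq_eqVlt => /orP [/eqP ->|hj].
  have -> : B (p m.+1) (p m) = 0 by apply: Ho => //; rewrite neq_ltn ltnSn orbT.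
  rewrite mulr0 subr0.
  have -> : B (A *m p m.+1) (p m) = dotv (A *m p m.+1) (A *m p m) by [].
  by rewrite divfK ?subrr // Bk.
have -> : B (p m.+1) (p j) = 0.
  apply: Ho => //; last by rewrite neq_ltn ltnS (ltnW hj) orbT.
  by apply: leqW; apply: ltnW.
have -> : B (p m) (p j) = 0.
  apply: Ho => //; [by apply: leqW; apply: ltnW | by rewrite neq_ltn hj orbT].
rewrite !mulr0 !subr0.
have -> : B (A *m p m.+1) (p j) = 0; last by rewrite mulr0.
have /eqP : gamma j * B (A *m p m.+1) (p j) = 0; last by rewrite mulf_eq0 (negbTE (Hg j)) => /eqP.
have [s [w E]] := prec j.
rewrite /B -dotvZr E dotv_sym ?AT // !mulmxDr -!scalemxAr !dotvDr !dotvZr.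
have -> : dotv (p m.+1) (A *m p j.+1) = 0.
  by apply: (Ho m.+1 j.+1) => //; rewrite ?neq_ltn ?ltnS ?hj ?orbT //; apply: ltnW.
have -> : dotv (p m.+1) (A *m p j) = 0.
  apply: (Ho m.+1 j) => //; rewrite ?neq_ltn ?ltnS ?(ltnW hj) ?orbT //.
  by apply: leqW; apply: ltnW.
have -> : dotv (p m.+1) (A *m pm j) = 0.
  case: j hj {E} => [|i] hi; first exact: B0r.
  apply: (Ho m.+1 i) => //; [lia | rewrite neq_ltn; apply/orP; right; lia].
by rewrite !mulr0 !addr0.
Qed.

Definition Inv k :=
  [/\ (forall j, (j <= k)%N -> p j != 0),
      (forall i j, (i <= k)%N -> (j <= k)%N -> i != j -> B (p i) (p j) = 0),
      (forall j, (j < k)%N -> dotv (r k) (p j) = 0) &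
      r k \in <<mkseq p k.+1>>%VS].

Lemma inv k : (forall j, (j <= k)%N -> r j != 0) -> Inv k.
Proof.
elim: k => [|k IH] Hr.
  split => //.
  - by move=> j; rewrite leqn0 => /eqP ->; exact: (Hr 0 (leqnn 0)).
  - by move=> i j; rewrite !leqn0 => /eqP -> /eqP ->; rewrite eqxx.
  - by rewrite /= memv_span1.
have [Hp Ho Hc Hs] := IH (fun j hj => Hr j (leqW hj)).
have Bk j : (j <= k)%N -> B (p j) (p j) != 0 by move=> /Hp /Bpos.
have Hc' : forall j, (j < k.+1)%N -> dotv (r k.+1) (p j) = 0.
  move=> j; rewrite ltnS leq_eqVlt => /orP [/eqP ->|hj].
    by rewrite rS dotvBl dotvZl dotv_sym ?AT // divfK ?subrr // Bk.
  rewrite rS dotvBl dotvZl dotv_sym ?AT // Hc //.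
  have -> : dotv (p k) (A *m p j) = 0.
    by apply: (Ho k j) => //; [exact: ltnW | rewrite eq_sym ltn_eqF].
  by rewrite mulr0 subr0.
have Hs' : r k.+1 \in <<mkseq p k.+2>>%VS.
  rewrite rS; apply: memvB.
    have /subvP := sub_span (@mkseq_sub k.+1 k.+2 (leqnSn _)); apply; exact: Hs.
  apply: memvZ; have [s [w E]] := prec k.
  rewrite -[A *m p k](scalerK (Hg k)) E; apply: memvZ.
  apply: memvD; first apply: memvD.
  - by apply: memv_span; apply: p_in.
  - apply: memvZ; case: k {IH Hr Hp Ho Hc Hs Bk Hc' E} => [|k]; first exact: mem0v.
    by apply: memv_span; apply: p_in; rewrite ltnS leqW // leqnSn.
  - by apply: memvZ; apply: memv_span; apply: p_in; rewrite ltnS leqW.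
have Key : forall j, (j <= k)%N -> B (p k.+1) (p j) = 0 by apply: key.
split => //.
- move=> j; rewrite leq_eqVlt => /orP [/eqP ->|]; last by rewrite ltnS; apply: Hp.
  apply/eqP => p0.
  suff E : r k.+1 = 0 by move: (Hr k.+1 (leqnn _)); rewrite E eqxx.
  have := @orth_span_eq0 R n _ _ Hs'; apply.
  move=> x /mapP [i]; rewrite mem_iota => /andP[_ hi] ->.
  move: hi; rewrite add0n ltnS leq_eqVlt => /orP [/eqP ->|].
    exact: (etrans (congr1 (dotv (r k.+1)) p0) (@dotv0r R n _)).
  exact: Hc'.
- move=> i j; rewrite [(i <= _)%N]leq_eqVlt [(j <= _)%N]leq_eqVlt !ltnS.
  move=> /orP [/eqP ->|hi] /orP [/eqP ->|hj].
  + by rewrite eqxx.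
  + by move=> _; apply: Key.
  + by move=> _; rewrite Bsym; apply: Key.
  + exact: Ho.
Qed.

Lemma free_p k : (forall j, (j <= k)%N -> p j != 0) ->
  (forall i j, (i <= k)%N -> (j <= k)%N -> i != j -> B (p i) (p j) = 0) ->
  free (mkseq p k.+1).
Proof.
move=> Hp Ho.
have sz : size (mkseq p k.+1) == k.+1 by rewrite size_mkseq.
suff: free (Tuple sz) by [].
apply/freeP => c Hc i.
have := congr1 (dotv (A *m p i)) Hc.
rewrite dotv_sumr dotv0r (bigD1 i) //= big1 ?addr0.
  have hi : (i <= k)%N by rewrite -ltnS ltn_ord.
  rewrite dotvZr /= nth_mkseq ?ltn_ord // dotv_sym ?AT // => /eqP.
  by rewrite mulf_eq0 (negbTE (Bpos (Hp i hi) : dotv (p i) (A *m p i) != 0)) orbF => /eqP.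
move=> j hj; rewrite dotvZr /= nth_mkseq ?ltn_ord // dotv_sym ?AT //.
have -> : dotv (p i) (A *m p j) = 0.
  by apply: Ho; rewrite 1?eq_sym // -ltnS ltn_ord.
by rewrite mulr0.
Qed.

End CD.

Theorem lemma3 (R : realFieldType) (n : nat) (A : 'M[R]_n) (b y0 : 'cV[R]_n)
    (gamma : nat -> R) :
  spd A -> (forall k, gamma k != 0) ->
  (forall k : nat,
     (forall j : nat, (j <= k)%N -> cd_r_ A b y0 gamma j != 0) ->
     free (mkseq (cd_p_ A b y0 gamma) k.+1)) /\
  (exists h : nat, [/\ (h <= n)%N,
     (forall j : nat, (j < h)%N -> cd_r_ A b y0 gamma j != 0) &
     A *m cd_y_ A b y0 gamma h = b]).
Proof.
move=> HA Hg.
have Hfree : forall k : nat,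
     (forall j : nat, (j <= k)%N -> cd_r_ A b y0 gamma j != 0) ->
     free (mkseq (cd_p_ A b y0 gamma) k.+1).
  move=> k Hr; have [Hp Ho _ _] := @inv R n A b y0 gamma HA Hg k Hr.
  exact: (@free_p R n A b y0 gamma HA k Hp Ho).
split => //.
have Hex : exists h, (h <= n)%N && (cd_r_ A b y0 gamma h == 0).
  case: (boolP [exists h : 'I_n.+1, cd_r_ A b y0 gamma h == 0]).
    by move=> /existsP [h Hh]; exists h; rewrite Hh -ltnS ltn_ord.
  move=> /existsPn Hn.
  have Hr : forall j, (j <= n)%N -> cd_r_ A b y0 gamma j != 0.
    by move=> j hj; have := Hn (Ordinal (hj : (j < n.+1)%N)).
  by have := @free_size R n _ (Hfree n Hr); rewrite size_mkseq ltnn.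
case: (ex_minnP Hex) => h /andP [hn /eqP hr] hmin.
exists h; split => //.
  move=> j hj; apply/negP => /eqP rj.
  by have := hmin j; rewrite rj eqxx andbT (leq_trans (ltnW hj) hn) => /(_ isT); rewrite leqNgt hj.
have := @r_eq R n A b y0 gamma h; rewrite hr => /esym /eqP; rewrite subr_eq0 => /eqP E.
exact: (esym E).
Qed.
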